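(* Let $C$ be a convex subset of a topological vector space and let $f,g:C\to\mathbb{R}$ be continuous functions such that $g$ is convex and non-negative, $0$ belongs to the image of $g$, and $g^{-1}(0)\subseteq f^{-1}(0)$. Let $\lambda\ge 0$ and consider the problem of minimising $g(v)$ over $v\in C$ subject to $f(v)\ge\lambda$. Then every minimiser $v$ of this problem satisfies $f(v)=\lambda$; in other words, the set of minimisers of $g$ over $\{v\in C: f(v)\ge\lambda\}$ coincides with the set of minimisers of $g$ over $\{v\in C: f(v)=\lambda\}$. *)

(* Defs.v *)
From HB Require Import structures.
From mathcomp Require Import all_boot all_order all_algebra.
From mathcomp Require Import all_classical all_reals all_analysis.
Set Implicit Arguments. Unset Strict Implicit. Unset Printing Implicit Defensive.
Import Order.TTheory GRing.Theory Num.Theory.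
Local Open Scope classical_set_scope.
Local Open Scope ring_scope.

Definition is_constrained_minimiser (R : realType) (E : topologicalLmodType R)
  (C : set E) (f g : E -> R) (lam : R) (v : E) : Prop :=
  [/\ C v, lam <= f v & forall w, C w -> lam <= f w -> g v <= g w].

(* Main.v *)
Require Import Defs.
From HB Require Import structures.
From mathcomp Require Import all_boot all_order all_algebra.
From mathcomp Require Import all_classical all_reals all_analysis.
Import Order.TTheory GRing.Theory Num.Theory.
Local Open Scope classical_set_scope.
Local Open Scope ring_scope.
Local Open Scope convex_scope.
From mathcomp Require Import lra.

Lemma line_cont (R : realType) (E : topologicalLmodType R) (v d : E) :
  (fun s : R^o => v + s *: d) @ nbhs (0 : R^o) --> v.
Proof.
have h1 : (fun s : R^o => (s, d)) @ nbhs (0:R^o) --> ((0:R^o), d).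
  by apply: (@cvg_pair _ _ _ _ (nbhs (0 : R^o))); [exact: cvg_id | exact: cvg_cst].
have h2 : (fun s : R^o => s *: d) @ nbhs (0:R^o) --> (0:R) *: d.
  exact: (cvg_comp _ _ h1 (@scale_continuous R E ((0:R^o), d))).
have h3 : (fun s : R^o => (v, s *: d)) @ nbhs (0:R^o) --> (v, (0:R) *: d).
  by apply: (@cvg_pair _ _ _ _ (nbhs v)); [exact: cvg_cst | exact: h2].
have h4 := cvg_comp _ _ h3 (@add_continuous E (v, (0:R) *: d)).
by rewrite scale0r addr0 in h4.
Qed.

Theorem lemma4 (R : realType) (E : topologicalLmodType R) (C : set E)
  (f g : E -> R) (lam : R) :
  convex_set (C : set (convex_lmodType E)) ->
  {within C, continuous (f : E -> R^o)} ->
  {within C, continuous (g : E -> R^o)} ->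
  convex_function (C : set (convex_lmodType E)) g ->
  (forall w, C w -> 0 <= g w) ->
  (exists2 w, C w & g w = 0) ->
  (forall w, C w -> g w = 0 -> f w = 0) ->
  0 <= lam ->
  forall v, is_constrained_minimiser C f g lam v -> f v = lam.
Proof.
move=> convC fc gc gconv g0 [w0 Cw0 gw0] gf lam0 v [Cv lamfv vmin].
apply/eqP; rewrite eq_le lamfv andbT leNgt; apply/negP => flt.
have gv0 : 0 < g v.
  rewrite lt_neqAle g0 // andbT; apply/eqP => gv.
  by move: flt; rewrite (gf v Cv (esym gv)) ltNge lam0.
have cvf : (f : E -> R^o) @ within C (nbhs v) --> (f v : R^o).
  by move/subspace_continuousP: fc; apply.
have H : \forall x \near within C (nbhs v), lam < f x.
  exact: (@cvgr_gt R _ _ _ (f : E -> R^o) (f v) cvf lam flt).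
have H1 : nbhs v (fun x => C x -> lam < f x) by exact: H.
have H2 := line_cont R E v (w0 - v) _ H1.
move: H2 => /nbhs_ballP [e /= e0 He].
have [s [s0 se s1]] : exists s, [/\ 0 < s, s < e & s <= 1 / 2].
  by case: (leP e 1) => he; [exists (e / 2) | exists (1 / 2)]; split; lra.
have t0 : 0 <= 1 - s by lra.
have t1 : 1 - s <= 1 by lra.
pose t : {i01 R} := Itv01 t0 t1.
pose x := v + s *: (w0 - v).
have xE : ((v : convex_lmodType E) <| t |> w0) = x.
  rewrite /x /=.
  change ((1 - s) *: v + (1 - (1 - s)) *: w0 = v + s *: (w0 - v)).
  by rewrite subKr scalerBl scale1r scalerBr -addrA [_ + s *: w0]addrC.
have Cx : C x.
  by rewrite -xE; apply: set_mem; apply: convC; apply: mem_set.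
have flam : lam < f x.
  apply: (He s) => //.
  by rewrite /ball /= sub0r normrN gtr0_norm.
have gx := gconv t v w0 (mem_set Cv) (mem_set Cw0).
rewrite xE /= gw0 in gx.
have := vmin x Cx (ltW flam).
rewrite convRE /= mulr0 addr0 in gx. move: gx.
nra.
Qed.
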